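(* Let $\mathcal{X},\mathcal{Y}$ be finite sets, $P_X$ a probability distribution on $\mathcal{X}$, $d:\mathcal{X}\times\mathcal{Y}\to[0,\infty)$, and $z\in(0,1]$. Then the map $Q_Y\mapsto\tilde D(z,Q_Y)$ is convex on the set of probability distributions on $\mathcal{Y}$.
   Context: $p_{c,x,y,u}=Q_Y\{y': d(x,y')<d(x,y)\}+u\cdot Q_Y\{y': d(x,y')=d(x,y)\}$; $\tilde D(z,Q_Y)=z^{-1}\mathbb{E}[d(X,Y)\mathbf{1}\{p_{c,X,Y,U}\le z\}]$ with $X\sim P_X$, $Y\sim Q_Y$, $U$ uniform on $[0,1]$ independent. *)

(* Defs.v *)
From HB Require Import structures.
From mathcomp Require Import all_boot all_order all_algebra.
From mathcomp Require Import all_classical all_reals all_analysis.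
Set Implicit Arguments. Unset Strict Implicit. Unset Printing Implicit Defensive.
Import Order.TTheory GRing.Theory Num.Theory.
Local Open Scope classical_set_scope.
Local Open Scope ring_scope.

Definition is_pmf (R : realType) (T : finType) (P : {ffun T -> R}) : Prop :=
  (forall t, 0 <= P t) /\ \sum_(t : T) P t = 1.

Definition pcxyu (R : realType) (X Y : finType) (d : X -> Y -> R)
  (Q : {ffun Y -> R}) (x : X) (y : Y) (u : R) : R :=
  \sum_(y' | d x y' < d x y) Q y' + u * \sum_(y' | d x y' == d x y) Q y'.

(* Pr_U[p_{c,x,y,U} <= z] for U uniform on [0,1] (Lebesgue measure) *)
Definition probU (R : realType) (X Y : finType) (d : X -> Y -> R)
  (Q : {ffun Y -> R}) (x : X) (y : Y) (z : R) : R :=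
  fine (@lebesgue_measure R
          (`[0%R, 1%R] `&` [set u : R | pcxyu d Q x y u <= z])).

(* \tilde D(z,Q_Y) = z^{-1} E[d(X,Y) 1{p_{c,X,Y,U} <= z}],
   X ~ P_X, Y ~ Q_Y, U ~ Unif[0,1], independent *)
Definition Dtilde (R : realType) (X Y : finType) (P : {ffun X -> R})
  (d : X -> Y -> R) (z : R) (Q : {ffun Y -> R}) : R :=
  z^-1 * \sum_(x : X) \sum_(y : Y) P x * Q y * d x y * probU d Q x y z.

Definition mixture (R : realType) (Y : finType) (t : R) (Q1 Q2 : {ffun Y -> R})
  : {ffun Y -> R} := [ffun y => t * Q1 y + (1 - t) * Q2 y].

(* Main.v *)
Require Import Defs.
From HB Require Import structures.
From mathcomp Require Import all_boot all_order all_algebra.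
From mathcomp Require Import all_classical all_reals all_analysis.
From mathcomp Require Import ring.
Import Order.TTheory GRing.Theory Num.Theory.
Local Open Scope ring_scope.

Section Tele.
Variables (R : realType) (T : finType) (w e : T -> R) (phi : R -> R).
Hypothesis phi0 : phi 0 = 0.

Definition FA (A : {set T}) y := \sum_(y' in A | e y' < e y) w y'.
Definition GA (A : {set T}) y := \sum_(y' in A | e y' == e y) w y'.

Lemma tele_n n : forall A : {set T}, (#|A| <= n)%N ->
  \sum_(y in A) w y / GA A y * (phi (FA A y + GA A y) - phi (FA A y))
  = phi (\sum_(y in A) w y).
Proof.
elim: n => [|n IH] A cA.
  have /cards0_eq -> : #|A| = 0%N by apply/eqP; rewrite -leqn0.
  by rewrite !big_set0 phi0.
case: (set_0Vmem A) => [->|[y0 y0A]]; first by rewrite !big_set0 phi0.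
case: (@arg_maxP _ _ _ y0 (fun i => i \in A) e y0A) => ym ymA ymmax.
set M := e ym.
set A' := [set y in A | e y < M].
have cA' : (#|A'| <= n)%N.
  have : (#|A'| < #|A|)%N.
    apply: proper_card; apply/fintype.properP; split.
      by apply/fintype.subsetP => y; rewrite finset.in_set => /andP[].
    by exists ym => //; rewrite finset.in_set ltxx andbF.
  by move=> h; rewrite -ltnS (leq_trans h).
set Gm := \sum_(y in A | ~~ (e y < M)) w y.
set S' := \sum_(y in A') w y.
have eA' : forall y, (y \in A') = (y \in A) && (e y < M) by move=> y; rewrite finset.in_set.
have HF1 : forall y, y \in A' -> FA A y = FA A' y /\ GA A y = GA A' y.
  move=> y; rewrite eA' => /andP[yA yM]; split; apply: eq_bigl => y'; rewrite eA'.
    case: (ltP (e y') (e y)) => h; rewrite ?andbF ?andbT //.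
    by rewrite (lt_trans h yM) andbT.
  by case: eqP => [->|]; rewrite ?andbF ?andbT ?yM ?andbT.
have HF2 : forall y, y \in A -> ~~ (e y < M) -> FA A y = S' /\ GA A y = Gm.
  move=> y yA; rewrite -leNgt => My.
  have eyM : e y = M by apply/eqP; rewrite eq_le My andbT; exact: ymmax.
  rewrite /FA /GA eyM; split; apply: eq_bigl => y'; rewrite ?eA' //.
  case y'A: (y' \in A) => //=.
  by move: (ymmax y' y'A); rewrite -/M => h; have h2 : e y' <= M := h; rewrite -leNgt eq_le h2.
have SA : \sum_(y in A) w y = S' + Gm.
  rewrite (bigID (fun y => e y < M)) /=; congr (_ + _).
  by apply: eq_bigl => y; rewrite eA'.
rewrite (bigID (fun y => e y < M)) /= SA.
have -> : \sum_(y in A | e y < M) w y / GA A y * (phi (FA A y + GA A y) - phi (FA A y))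
   = phi S'.
  rewrite -(IH A' cA'); apply: eq_big => y; first by rewrite eA'.
  by rewrite -eA' => /HF1 [-> ->].
have -> : \sum_(y in A | ~~ (e y < M)) w y / GA A y * (phi (FA A y + GA A y) - phi (FA A y))
   = Gm / Gm * (phi (S' + Gm) - phi S').
  rewrite /Gm big_distrl big_distrl /=; apply: eq_bigr => y /andP[yA yM].
  by case: (HF2 y yA yM) => -> ->.
have [->|Gm0] := eqVneq Gm 0; first by rewrite addr0 subrr mulr0 addr0.
by rewrite divff // mul1r addrC subrK.
Qed.
End Tele.

Local Open Scope classical_set_scope.
Lemma leb_cc (R : realType) (a b : R) : a <= b ->
  fine (@lebesgue_measure R `[a, b]) = b - a.
Proof.
move=> ab; rewrite lebesgue_measure_itv /=.
rewrite lte_fin; case: ltgtP ab => //= [-> _]; by rewrite subrr.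
Qed.

Lemma probU_eq (R : realType) (X Y : finType) (d : X -> Y -> R)
  (Q : {ffun Y -> R}) (x : X) (y : Y) (z : R) :
  let F := \sum_(y' | d x y' < d x y) Q y' in
  let G := \sum_(y' | d x y' == d x y) Q y' in
  0 < G ->
  probU d Q x y z = (Num.min (F + G) z - Num.min F z) / G.
Proof.
move=> F G G0; rewrite /probU /pcxyu -/F -/G.
have [zF|Fz] := ltP z F.
  have -> : `[0%R, 1%R] `&` [set u : R | F + u * G <= z] = set0.
    apply/seteqP; split => // u /= [].
    rewrite in_itv /= => /andP[u0 _] H.
    have : F <= F + u * G by rewrite lerDl mulr_ge0 // ltW.
    move=> h; have := le_trans h H; rewrite leNgt zF //.
  rewrite measure0 /=.
  rewrite min_r; last by rewrite ltW // (lt_le_trans zF) // lerDl ltW.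
  by rewrite subrr mul0r.
set c := (z - F) / G.
have c0 : 0 <= c by rewrite divr_ge0 // ?subr_ge0 // ltW.
have -> : `[0%R, 1%R] `&` [set u : R | F + u * G <= z] = `[0, Num.min 1 c].
  apply/seteqP; split => u /=.
    rewrite !in_itv /= => -[/andP[u0 u1] H]; rewrite u0 /= le_min u1 /=.
    by rewrite /c ler_pdivlMr // lerBrDl.
  rewrite !in_itv /= le_min => /andP[u0 /andP[u1 uc]]; rewrite u0 u1; split => //.
  by move: uc; rewrite /c ler_pdivlMr // lerBrDl.
rewrite leb_cc ?le_min ?ler01 ?c0 // subr0.
have [zFG|FGz] := leP z (F + G).
  rewrite min_r // /c ler_pdivrMr // mul1r lerBlDl //.
rewrite min_l; first by rewrite addrC addKr divff // gt_eqF.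
by rewrite /c ler_pdivlMr // mul1r lerBrDl ltW.
Qed.
Local Close Scope classical_set_scope.

Lemma clamp_props (R : realType) (F G z : R) : 0 < G ->
  let c := (Num.min (F + G) z - Num.min F z) / G in
  [/\ 0 <= c, c <= 1, c < 1 -> z < F + G & 0 < c -> F < z].
Proof.
move=> G0 c; rewrite /c.
have [zF|Fz] := leP z F.
  rewrite min_r; last by rewrite (le_trans zF) // lerDl ltW.
  rewrite subrr mul0r lexx ler01; split => //; last by rewrite ltxx.
  by move=> _; rewrite (le_lt_trans zF) // ltrDl.
have [zFG|FGz] := leP z (F + G).
  have h1 : 0 <= (z - F) / G by rewrite divr_ge0 // ?subr_ge0 // ltW.
  have h2 : (z - F) / G <= 1 by rewrite ler_pdivrMr // mul1r lerBlDl.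
  split => // h.
  by rewrite ltr_pdivrMr // mul1r ltrBlDl in h.
rewrite addrAC subrr add0r divff ?gt_eqF //; split => //; rewrite ?lexx ?ler01 //.
by rewrite ltxx.
Qed.

Section PerX.
Variables (R : realType) (X Y : finType) (d : X -> Y -> R) (z : R) (x : X).
Hypothesis z0 : 0 < z.
Hypothesis z1 : z <= 1.

Definition mQ (Q : {ffun Y -> R}) y := Q y * probU d Q x y z.

Lemma G_ge (Q : {ffun Y -> R}) y : is_pmf Q ->
  Q y <= \sum_(y' | d x y' == d x y) Q y'.
Proof.
move=> [Q0 _]; rewrite (bigD1 y) //= lerDl sumr_ge0 // => i _; exact: Q0.
Qed.

Lemma mQ_props (Q : {ffun Y -> R}) y : is_pmf Q ->
  [/\ 0 <= mQ Q y, mQ Q y <= Q y,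
      mQ Q y < Q y -> z < \sum_(y' | d x y' < d x y) Q y' + \sum_(y' | d x y' == d x y) Q y'
    & 0 < mQ Q y -> \sum_(y' | d x y' < d x y) Q y' < z].
Proof.
move=> pQ; have Q0 := pQ.1 y.
have [Qy0|Qpos] := eqVneq (Q y) 0.
  by rewrite /mQ Qy0 mul0r lexx ltxx.
have Qp : 0 < Q y by rewrite lt_neqAle eq_sym Qpos Q0.
have G0 := lt_le_trans Qp (G_ge Q y pQ).
rewrite /mQ probU_eq //.
case: (@clamp_props R (\sum_(y' | d x y' < d x y) Q y') _ z G0) => c0 c1 c1' c0'.
split.
- exact: mulr_ge0.
- by rewrite ger_pMr.
- by move=> h; apply: c1'; rewrite -(ltr_pM2l Qp) mulr1.
- by move=> h; apply: c0'; rewrite (pmulr_rgt0 _ Qp) in h.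
Qed.

Lemma mQ_sum (Q : {ffun Y -> R}) : is_pmf Q -> \sum_y mQ Q y = z.
Proof.
move=> pQ.
have := @tele_n R Y Q (d x) (fun s => Num.min s z) (min_l (ltW z0)) #|[set: Y]| [set: Y] (leqnn _).
have -> : \sum_(y in [set: Y]) Q y = 1.
  by rewrite -pQ.2; apply: eq_bigl => y; rewrite finset.in_setT.
rewrite min_r // => <-.
apply: eq_big => y; first by rewrite finset.in_setT.
move=> _.
have FE : @FA R Y Q (d x) [set: Y] y = \sum_(y' | d x y' < d x y) Q y'.
  by apply: eq_bigl => y'; rewrite finset.in_setT.
have GE : @GA R Y Q (d x) [set: Y] y = \sum_(y' | d x y' == d x y) Q y'.
  by apply: eq_bigl => y'; rewrite finset.in_setT.
rewrite FE GE /mQ.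
have Q0 := pQ.1 y.
have [->|Qpos] := eqVneq (Q y) 0; first by rewrite !mul0r.
have Qp : 0 < Q y by rewrite lt_neqAle eq_sym Qpos Q0.
have G0 := lt_le_trans Qp (G_ge Q y pQ).
by rewrite probU_eq // mulrA mulrAC.
Qed.

Lemma mQ_pair (Q : {ffun Y -> R}) y y' : is_pmf Q ->
  mQ Q y < Q y -> 0 < mQ Q y' -> d x y' <= d x y.
Proof.
move=> pQ h1 h2.
case: (mQ_props Q y pQ) => _ _ /(_ h1) H1 _.
case: (mQ_props Q y' pQ) => _ _ _ /(_ h2) H2.
rewrite leNgt; apply/negP => lt.
suff : \sum_(y0 | d x y0 < d x y) Q y0 + \sum_(y0 | d x y0 == d x y) Q y0 <=
       \sum_(y0 | d x y0 < d x y') Q y0.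
  by move=> h; have := lt_trans (lt_le_trans H1 h) H2; rewrite ltxx.
rewrite (bigID (fun y0 => d x y0 <= d x y) (fun y0 => d x y0 < d x y')) /=.
rewrite -[X in X <= _]addr0; apply: lerD; last first.
  rewrite sumr_ge0 // => i _; exact: pQ.1.
rewrite (bigID (fun y0 => d x y0 < d x y) (fun y0 => _ && _)) /=.
apply: lerD; rewrite le_eqVlt; apply/orP; left; apply/eqP; apply: eq_bigl => i.
  by case: (ltP (d x i) (d x y)) => h; rewrite ?andbF ?andbT // (lt_trans h lt) ltW.
case: (ltgtP (d x i) (d x y)) => h; rewrite ?andbF ?andbT //=.
by rewrite h lt.
Qed.

Hypothesis dpos : forall y, 0 <= d x y.

Lemma mQ_opt (Q : {ffun Y -> R}) (nu : Y -> R) : is_pmf Q ->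
  (forall y, 0 <= nu y <= Q y) -> \sum_y nu y = z ->
  \sum_y mQ Q y * d x y <= \sum_y nu y * d x y.
Proof.
move=> pQ hnu snu.
set th := \big[Num.max/0]_(y | 0 < mQ Q y) d x y.
have H1 : forall y, 0 < mQ Q y -> d x y <= th.
  by move=> y h; apply: (le_bigmax_cond _ (P := fun y => 0 < mQ Q y)).
have H2 : forall y, mQ Q y < Q y -> th <= d x y.
  move=> y h; apply: bigmax_le => // i hi; exact: (mQ_pair _ _ _ pQ h hi).
have key : 0 <= \sum_y (nu y - mQ Q y) * (d x y - th).
  apply: sumr_ge0 => y _.
  have /andP[n0 nQ] := hnu y.
  case: (ltgtP (nu y) (mQ Q y)) => h.
  - apply: mulr_le0; first by rewrite subr_le0 ltW.
    by rewrite subr_le0 H1 // (le_lt_trans n0 h).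
  - apply: mulr_ge0; first by rewrite subr_ge0 ltW.
    by rewrite subr_ge0 H2 // (lt_le_trans h nQ).
  - by rewrite h subrr mul0r.
have E : \sum_y (nu y - mQ Q y) * (d x y - th) =
  \sum_y nu y * d x y - \sum_y mQ Q y * d x y - (\sum_y nu y - \sum_y mQ Q y) * th.
  rewrite -!sumrB mulr_suml -sumrB; apply: eq_bigr => y _.
  by ring.
by move: key; rewrite E snu mQ_sum // subrr mul0r subr0 subr_ge0.
Qed.

Lemma mQ_convex (Q1 Q2 : {ffun Y -> R}) (t : R) :
  is_pmf Q1 -> is_pmf Q2 -> 0 <= t -> t <= 1 ->
  \sum_y mQ (mixture t Q1 Q2) y * d x y <=
  t * \sum_y mQ Q1 y * d x y + (1 - t) * \sum_y mQ Q2 y * d x y.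
Proof.
move=> p1 p2 t0 t1.
have t1' : 0 <= 1 - t by rewrite subr_ge0.
have pm : is_pmf (mixture t Q1 Q2).
  split.
    by move=> y; rewrite ffunE addr_ge0 // mulr_ge0 // ?p1.1 ?p2.1.
  under eq_bigr do rewrite ffunE.
  by rewrite big_split /= -!mulr_sumr p1.2 p2.2 !mulr1 addrC subrK.
have hnu : forall y, 0 <= t * mQ Q1 y + (1 - t) * mQ Q2 y <= mixture t Q1 Q2 y.
  move=> y; case: (mQ_props Q1 y p1) => a1 b1 _ _; case: (mQ_props Q2 y p2) => a2 b2 _ _.
  rewrite ffunE (addr_ge0 (mulr_ge0 t0 a1) (mulr_ge0 t1' a2)) /=.
  by apply: lerD; apply: ler_wpM2l.
have hs : \sum_y (t * mQ Q1 y + (1 - t) * mQ Q2 y) = z.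
  by rewrite big_split /= -!mulr_sumr !mQ_sum //; ring.
apply: le_trans (mQ_opt _ _ pm hnu hs) _.
rewrite !mulr_sumr -big_split /=; rewrite le_eqVlt; apply/orP; left; apply/eqP; apply: eq_bigr => y _.
by rewrite mulrDl !mulrA.
Qed.
End PerX.

Lemma DE (R : realType) (X Y : finType) (P : {ffun X -> R}) (d : X -> Y -> R) (z : R)
  (Q : {ffun Y -> R}) :
  Dtilde P d z Q = z^-1 * \sum_x P x * \sum_y @mQ R X Y d z x Q y * d x y.
Proof.
rewrite /Dtilde; congr (_ * _); apply: eq_bigr => x _.
rewrite mulr_sumr; apply: eq_bigr => y _; rewrite /mQ; ring.
Qed.

Theorem corollary3 (R : realType) (X Y : finType) (P : {ffun X -> R})
  (d : X -> Y -> R) (z : R) :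
  is_pmf P -> (forall x y, 0 <= d x y) -> 0 < z -> z <= 1 ->
  forall (Q1 Q2 : {ffun Y -> R}) (t : R),
    is_pmf Q1 -> is_pmf Q2 -> 0 <= t -> t <= 1 ->
    Dtilde P d z (mixture t Q1 Q2) <=
      t * Dtilde P d z Q1 + (1 - t) * Dtilde P d z Q2.
Proof.
move=> pP dpos z0 z1 Q1 Q2 t p1 p2 t0 t1.
rewrite !DE.
set V1 := fun x => \sum_y @mQ R X Y d z x Q1 y * d x y.
set V2 := fun x => \sum_y @mQ R X Y d z x Q2 y * d x y.
apply: (@le_trans _ _ (z^-1 * \sum_x P x * (t * V1 x + (1 - t) * V2 x))).
  rewrite ler_pM2l ?invr_gt0 //; apply: ler_sum => x _.
  apply: ler_wpM2l; first exact: pP.1.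
  exact: mQ_convex.
rewrite le_eqVlt; apply/orP; left; apply/eqP.
rewrite (eq_bigr (fun x => t * (P x * V1 x) + (1 - t) * (P x * V2 x))); last first.
  by move=> x _; ring.
rewrite big_split /= -!mulr_sumr; ring.
Qed.
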